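(* Fix $M\ge1$, $L=\lfloor M/2\rfloor$ and complex constants $\alpha_1,\dots,\alpha_{L+1},\beta,\delta,\epsilon,\lambda_1,\dots,\lambda_M,\eta,\omega_1,\dots,\omega_L,\zeta$. Let $\mathcal A$ be a unital associative algebra over $\mathbb C$ with elements $b,b^\dagger$ and a unital algebra homomorphism $f\mapsto f(N)$ from the algebra of functions $\mathbb Z\to\mathbb C$ into $\mathcal A$ such that $f(N)b^\dagger=b^\dagger f(N+1)$ and $f(N)b=bf(N-1)$ for all $f$, and $b^\dagger b=\Phi(N)$, $bb^\dagger=\Phi(N+1)$ for some $\Phi:\mathbb Z\to\mathbb C$. For functions $A,h,\rho:\mathbb Z\to\mathbb C$ put $\Delta A(n)=A(n+1)-A(n)$ and $$\mathbf A=A(N),\quad \mathbf B=h(N)+b^\dagger\rho(N)+\rho(N)b,\quad \mathbf C=b^\dagger\Delta A(N)\rho(N)-\rho(N)\Delta A(N)b .$$ Then $[\mathbf A,\mathbf B]=\mathbf C$. If moreover for all $n\in\mathbb Z$: (q1) $(\Delta A(n))^2=\delta+\beta(A(n)+A(n+1))$; (q2) $\sum_{i=1}^{L+1}\alpha_iA(n)^i+\delta h(n)+\epsilon+2\beta A(n)h(n)=0$; (q3) $\Delta A(n)-\Delta A(n+1)=-\beta$; (q4) $\Delta A(n)(h(n+1)-h(n))=-\beta(h(n+1)+h(n))+\sum_{i=1}^{L}\omega_i(A(n+1)^i+A(n)^i)+\eta$; (q5) $2\Phi(n+1)\rho(n)^2\Delta A(n)-2\Phi(n)\rho(n-1)^2\Delta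 A(n-1)=\zeta+\sum_{i=1}^{M}\lambda_iA(n)^i-\beta h(n)^2-\beta(\rho(n-1)^2\Phi(n)+\rho(n)^2\Phi(n+1))+\eta h(n)+2\sum_{j=1}^{L}\omega_jA(n)^jh(n)$; then $[\mathbf A,\mathbf C]=\sum_{i=1}^{L+1}\alpha_i\mathbf A^i+\delta\mathbf B+\epsilon+\beta\{\mathbf A,\mathbf B\}$ and $[\mathbf B,\mathbf C]=\sum_{i=1}^{M}\lambda_i\mathbf A^i-\beta\mathbf B^2+\eta\mathbf B+\sum_{i=1}^{L}\omega_i\{\mathbf A^i,\mathbf B\}+\zeta$. Furthermore, (q1) and (q3) are satisfied by $A(n)=\sqrt\delta\,n+c_1$ when $\beta=0$ and by $A(n)=-\frac{\beta}{8}-\frac{\delta}{2\beta}+\frac{\beta}{2}(n+c_1)^2$ when $\beta\neq0$ (any constant $c_1$, any square root of $\delta$); and if $\delta+2\beta A(n)\ne0$ for all $n$, (q2) is satisfied by $h(n)=-\big(\sum_{i=1}^{L+1}\alpha_iA(n)^i+\epsilon\big)/(\delta+2\beta A(n))$, which for these $A$ equals $-4\big(\sum_{i=1}^{L+1}\alpha_iA(n)^i+\epsilon\big)/(4A'(n)^2-\beta^2)$, where $A'$ is the derivative of $A$ regarded as a polynomial in $n$.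
   Context: $[X,Y]=XY-YX$, $\{X,Y\}=XY+YX$; $f(N+1)$ denotes the image of $n\mapsto f(n+1)$. The function $h$ is the paper's function $b(N)$, renamed to avoid confusion with the element $b$. $\lfloor y\rfloor$ is the integer part. *)

(* Defs.v *)
From HB Require Import structures.
From mathcomp Require Import all_boot all_order all_algebra.
Set Implicit Arguments. Unset Strict Implicit. Unset Printing Implicit Defensive.
Import Order.TTheory GRing.Theory Num.Theory.
Local Open Scope ring_scope.

Definition comm {R : pzRingType} (x y : R) : R := x * y - y * x.
Definition acomm {R : pzRingType} (x y : R) : R := x * y + y * x.

Definition Dlt {V : zmodType} (A : int -> V) (n : int) : V := A (n + 1) - A n.

(* The data b, b^dagger, and the unital algebra homomorphism f |-> f(N)
   from the algebra of functions Z -> C into Alg, with the commutation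
   relations and b^dagger b = Phi(N), b b^dagger = Phi(N+1). *)
Record N_rep (C : numClosedFieldType) (Alg : algType C)
    (phi : (int -> C) -> Alg) (b bd : Alg) (Phi : int -> C) : Prop := {
  rep_one : phi (fun _ => 1) = 1;
  rep_add : forall f g, phi (fun n => f n + g n) = phi f + phi g;
  rep_scale : forall (c : C) f, phi (fun n => c * f n) = c *: phi f;
  rep_mul : forall f g, phi (fun n => f n * g n) = phi f * phi g;
  rep_bd : forall f, phi f * bd = bd * phi (fun n => f (n + 1));
  rep_b : forall f, phi f * b = b * phi (fun n => f (n - 1));
  rep_bdb : bd * b = phi Phi;
  rep_bbd : b * bd = phi (fun n => Phi (n + 1))
}.

Section Conds.
Variable C : numClosedFieldType.

Definition q1 (beta delta : C) (A : int -> C) : Prop :=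
  forall n, Dlt A n ^+ 2 = delta + beta * (A n + A (n + 1)).

(* (q2) ; L is floor(M/2), the sum runs over i = 1 .. L+1 *)
Definition q2 (L : nat) (alpha : nat -> C) (beta delta eps : C)
    (A h : int -> C) : Prop :=
  forall n, \sum_(1 <= i < L.+2) alpha i * A n ^+ i + delta * h n + eps
            + 2 * beta * A n * h n = 0.

Definition q3 (beta : C) (A : int -> C) : Prop :=
  forall n, Dlt A n - Dlt A (n + 1) = - beta.

Definition q4 (L : nat) (omega : nat -> C) (beta eta : C)
    (A h : int -> C) : Prop :=
  forall n, Dlt A n * (h (n + 1) - h n)
    = - beta * (h (n + 1) + h n)
      + \sum_(1 <= i < L.+1) omega i * (A (n + 1) ^+ i + A n ^+ i) + eta.

Definition q5 (M L : nat) (lambda omega : nat -> C) (beta eta zeta : C)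
    (A h rho Phi : int -> C) : Prop :=
  forall n, 2 * Phi (n + 1) * rho n ^+ 2 * Dlt A n
            - 2 * Phi n * rho (n - 1) ^+ 2 * Dlt A (n - 1)
    = zeta + \sum_(1 <= i < M.+1) lambda i * A n ^+ i - beta * h n ^+ 2
      - beta * (rho (n - 1) ^+ 2 * Phi n + rho n ^+ 2 * Phi (n + 1))
      + eta * h n + 2 * \sum_(1 <= j < L.+1) omega j * A n ^+ j * h n.

Definition hsol (L : nat) (alpha : nat -> C) (beta delta eps : C)
    (A : int -> C) (n : int) : C :=
  - (\sum_(1 <= i < L.+2) alpha i * A n ^+ i + eps) / (delta + 2 * beta * A n).

End Conds.

(* Main.v *)
Require Import Defs.
From HB Require Import structures.
From mathcomp Require Import all_boot all_order all_algebra ring.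
From Stdlib Require Import FunctionalExtensionality.
Import Order.TTheory GRing.Theory Num.Theory.
Local Open Scope ring_scope.

Lemma lincomb (R : comNzRingType) (k x y u v : R) : u = v -> x - y = k * (u - v) -> x = y.
Proof. by move=> -> e; apply/eqP; rewrite -subr_eq0 e subrr mulr0. Qed.

Section AlgS.
Variables (C : numClosedFieldType) (Alg : algType C) (X : (int -> C) -> Alg)
  (b bd : Alg) (Phi : int -> C).
Hypothesis HR : N_rep X b bd Phi.

Definition zf : int -> C := fun _ => 0.

Lemma X_ext f g : (forall n, f n = g n) -> X f = X g.
Proof. by move=> e; rewrite (functional_extensionality f g e). Qed.

Lemma XD f g : X (fun n => f n + g n) = X f + X g.
Proof. by rewrite (rep_add HR). Qed.

Lemma XM f g : X f * X g = X (fun n => f n * g n).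
Proof. by rewrite (rep_mul HR). Qed.

Lemma XZ (c : C) f : c *: X f = X (fun n => c * f n).
Proof. by rewrite (rep_scale HR). Qed.

Lemma X0 : X zf = 0.
Proof.
have := XD zf zf; rewrite (@X_ext (fun n => zf n + zf n) zf); last by move=> n; rewrite /zf addr0.
by move/eqP; rewrite eq_sym -subr_eq0 addrK => /eqP.
Qed.

Lemma XN f : - X f = X (fun n => - f n).
Proof. by rewrite -scaleN1r XZ; apply: X_ext => n; rewrite mulN1r. Qed.

Lemma Xconst (c : C) : c%:A = X (fun _ => c).
Proof. by rewrite -(rep_one HR) XZ; apply: X_ext => n; rewrite mulr1. Qed.

Lemma Xbd f : X f * bd = bd * X (fun n => f (n + 1)).
Proof. by rewrite (rep_bd HR). Qed.

Lemma bX f : b * X f = X (fun n => f (n + 1)) * b.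
Proof.
rewrite (rep_b HR); congr (_ * _); apply: X_ext => n; by rewrite addrK.
Qed.

Lemma bdXb f : bd * X f * b = X (fun n => Phi n * f (n - 1)).
Proof. by rewrite -mulrA (rep_b HR) mulrA (rep_bdb HR) XM. Qed.

Lemma Xexp f i : X f ^+ i = X (fun n => f n ^+ i).
Proof.
elim: i => [|i IH]; first by rewrite expr0 -(rep_one HR); apply: X_ext => n; rewrite expr0.
by rewrite exprS IH XM; apply: X_ext => n; rewrite exprS.
Qed.

Lemma XsumExp (r : seq nat) (c : nat -> C) f :
  \sum_(i <- r) c i *: X f ^+ i = X (fun n => \sum_(i <- r) c i * f n ^+ i).
Proof.
elim: r => [|x r IH].
  by rewrite big_nil -X0; apply: X_ext => n; rewrite big_nil.
rewrite big_cons IH Xexp XZ -XD; apply: X_ext => n; by rewrite big_cons.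
Qed.

Lemma sum_acomm (r : seq nat) (c : nat -> C) (x y : Alg) :
  \sum_(i <- r) c i *: acomm (x ^+ i) y = acomm (\sum_(i <- r) c i *: x ^+ i) y.
Proof.
rewrite /acomm mulr_suml mulr_sumr -big_split /=.
by apply: eq_bigr => i _; rewrite scalerDr scalerAl scalerAr.
Qed.

Definition NF f0 f1 f2 f3 f4 :=
  X f0 + bd * X f1 + X f2 * b + bd * bd * X f3 + X f4 * b * b.

Lemma NF_ext f0 f1 f2 f3 f4 g0 g1 g2 g3 g4 :
  (forall n, f0 n = g0 n) -> (forall n, f1 n = g1 n) -> (forall n, f2 n = g2 n) ->
  (forall n, f3 n = g3 n) -> (forall n, f4 n = g4 n) ->
  NF f0 f1 f2 f3 f4 = NF g0 g1 g2 g3 g4.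
Proof.
by move=> e0 e1 e2 e3 e4; rewrite /NF (@X_ext _ _ e0) (@X_ext _ _ e1) (@X_ext _ _ e2) (@X_ext _ _ e3) (@X_ext _ _ e4).
Qed.

Lemma add5 (V : zmodType) (a0 a1 a2 a3 a4 b0 b1 b2 b3 b4 : V) :
  a0 + a1 + a2 + a3 + a4 + (b0 + b1 + b2 + b3 + b4) =
  (a0 + b0) + (a1 + b1) + (a2 + b2) + (a3 + b3) + (a4 + b4).
Proof.
by rewrite addrACA (addrACA (a0 + a1 + a2)) (addrACA (a0 + a1)) (addrACA a0).
Qed.

Lemma NF_add f0 f1 f2 f3 f4 g0 g1 g2 g3 g4 :
  NF f0 f1 f2 f3 f4 + NF g0 g1 g2 g3 g4 =
  NF (fun n => f0 n + g0 n) (fun n => f1 n + g1 n) (fun n => f2 n + g2 n)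
     (fun n => f3 n + g3 n) (fun n => f4 n + g4 n).
Proof.
by rewrite /NF add5 !XD !mulrDr !mulrDl.
Qed.

Lemma NF_scale (c : C) f0 f1 f2 f3 f4 :
  c *: NF f0 f1 f2 f3 f4 =
  NF (fun n => c * f0 n) (fun n => c * f1 n) (fun n => c * f2 n)
     (fun n => c * f3 n) (fun n => c * f4 n).
Proof.
rewrite /NF !scalerDr; congr (_ + _ + _ + _ + _).
- by rewrite XZ.
- by rewrite scalerAr XZ.
- by rewrite scalerAl XZ.
- by rewrite scalerAr XZ.
- by rewrite !scalerAl XZ.
Qed.

Lemma NF_opp f0 f1 f2 f3 f4 :
  - NF f0 f1 f2 f3 f4 =
  NF (fun n => - f0 n) (fun n => - f1 n) (fun n => - f2 n)
     (fun n => - f3 n) (fun n => - f4 n).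
Proof.
rewrite /NF !opprD; congr (_ + _ + _ + _ + _).
- by rewrite XN.
- by rewrite -mulrN XN.
- by rewrite -mulNr XN.
- by rewrite -mulrN XN.
- by rewrite -!mulNr XN.
Qed.

Lemma NF_sub f0 f1 f2 f3 f4 g0 g1 g2 g3 g4 :
  NF f0 f1 f2 f3 f4 - NF g0 g1 g2 g3 g4 =
  NF (fun n => f0 n - g0 n) (fun n => f1 n - g1 n) (fun n => f2 n - g2 n)
     (fun n => f3 n - g3 n) (fun n => f4 n - g4 n).
Proof. by rewrite NF_opp NF_add. Qed.

Lemma NF_X f : X f = NF f zf zf zf zf.
Proof. by rewrite /NF X0 ?mulr0 ?mul0r ?addr0. Qed.

Lemma NF_z f0 f1 f2 : NF f0 f1 f2 zf zf = X f0 + bd * X f1 + X f2 * b.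
Proof. by rewrite /NF X0 ?mulr0 ?mul0r ?addr0. Qed.

Lemma N1C f1 f2 f3 f4 :
  bd * X f1 * X f2 - X f3 * X f4 * b =
  NF zf (fun n => f1 n * f2 n) (fun n => - (f3 n * f4 n)) zf zf.
Proof. by rewrite NF_z X0 add0r -mulrA !XM -mulNr XN. Qed.

Lemma NF_mul f0 f1 f2 g0 g1 g2 :
  NF f0 f1 f2 zf zf * NF g0 g1 g2 zf zf =
  NF (fun n => f0 n * g0 n + Phi n * (f1 (n - 1) * g2 (n - 1)) + f2 n * Phi (n + 1) * g1 n)
     (fun n => f0 (n + 1) * g1 n + f1 n * g0 n)
     (fun n => f0 n * g2 n + f2 n * g0 (n + 1))
     (fun n => f1 (n + 1) * g1 n)
     (fun n => f2 n * g2 (n + 1)).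
Proof.
set G := NF g0 g1 g2 zf zf.
have L1 : X f0 * G = NF (fun n => f0 n * g0 n) (fun n => f0 (n + 1) * g1 n)
                        (fun n => f0 n * g2 n) zf zf.
  rewrite /G !NF_z !mulrDr; congr (_ + _ + _).
  - exact: XM.
  - by rewrite mulrA Xbd -mulrA XM.
  - by rewrite mulrA XM.
have L2 : bd * X f1 * G = NF (fun n => Phi n * (f1 (n - 1) * g2 (n - 1)))
                        (fun n => f1 n * g0 n) zf (fun n => f1 (n + 1) * g1 n) zf.
  have t1 : bd * X f1 * X g0 = bd * X (fun n => f1 n * g0 n) by rewrite -mulrA XM.
  have t2 : bd * X f1 * (bd * X g1) = bd * bd * X (fun n => f1 (n+1) * g1 n).
    by rewrite -mulrA (mulrA (X f1)) Xbd -mulrA XM mulrA.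
  have t3 : bd * X f1 * (X g2 * b) = X (fun n => Phi n * (f1 (n-1) * g2 (n-1))).
    by rewrite mulrA -(mulrA bd) XM bdXb.
  rewrite /G NF_z !mulrDr t1 t2 t3 /NF X0 ?mulr0 ?mul0r ?addr0.
  by rewrite addrC addrA.
have L3 : X f2 * b * G = NF (fun n => f2 n * Phi (n + 1) * g1 n) zf
                        (fun n => f2 n * g0 (n + 1)) zf (fun n => f2 n * g2 (n + 1)).
  have t1 : X f2 * b * X g0 = X (fun n => f2 n * g0 (n + 1)) * b.
    by rewrite -mulrA bX mulrA XM.
  have t2 : X f2 * b * (bd * X g1) = X (fun n => f2 n * Phi (n + 1) * g1 n).
    by rewrite mulrA -(mulrA (X f2)) (rep_bbd HR) !XM.
  have t3 : X f2 * b * (X g2 * b) = X (fun n => f2 n * g2 (n + 1)) * b * b.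
    by rewrite mulrA -(mulrA (X f2)) bX mulrA XM.
  rewrite /G NF_z !mulrDr t1 t2 t3 /NF X0 ?mulr0 ?mul0r ?addr0.
  by rewrite (addrC (X _ * b)).
rewrite {1}NF_z !mulrDl L1 L2 L3 !NF_add; apply: NF_ext => n; rewrite /zf; ring.
Qed.

Lemma NF_B f0 f1 f2 : X f0 + bd * X f1 + X f2 * b = NF f0 f1 f2 zf zf.
Proof. by rewrite NF_z. Qed.

Lemma partAB A h rho :
  comm (X A) (X h + bd * X rho + X rho * b) =
  bd * X (Dlt A) * X rho - X rho * X (Dlt A) * b.
Proof.
rewrite N1C NF_B (NF_X A) /comm !NF_mul NF_sub.
apply: NF_ext => n /=; rewrite /zf /Dlt; ring.
Qed.

Lemma partAC (L : nat) alpha beta delta eps A h rho :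
  q1 beta delta A -> q2 L alpha beta delta eps A h ->
  comm (X A) (bd * X (Dlt A) * X rho - X rho * X (Dlt A) * b) =
  \sum_(1 <= i < L.+2) alpha i *: X A ^+ i
  + delta *: (X h + bd * X rho + X rho * b)
  + eps%:A + beta *: acomm (X A) (X h + bd * X rho + X rho * b).
Proof.
move=> Q1 Q2.
rewrite N1C NF_B XsumExp Xconst (NF_X A) (NF_X (fun n => \sum_(_ <- _) _)) (NF_X (fun _ => eps)).
rewrite /comm /acomm !(NF_mul, NF_sub, NF_scale, NF_add).
apply: NF_ext => n /=; rewrite /zf.
- have E := Q2 n. apply: (@lincomb _ (-1) _ _ _ _ E); ring.
- have E := Q1 n; rewrite /Dlt in E *. apply: (@lincomb _ (rho n) _ _ _ _ E); ring.
- have E := Q1 n; rewrite /Dlt in E *. apply: (@lincomb _ (rho n) _ _ _ _ E); ring.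
- ring.
- ring.
Qed.

Ltac lc k E := first [ apply: (@lincomb C k _ _ _ _ E); ring
                     | apply: (@lincomb C (- k) _ _ _ _ E); ring ].

Lemma sumsplit (L : nat) (omega : nat -> C) (x y : C) :
  \sum_(1 <= i < L.+1) omega i * (x ^+ i + y ^+ i) =
  \sum_(1 <= i < L.+1) omega i * x ^+ i + \sum_(1 <= i < L.+1) omega i * y ^+ i.
Proof. by rewrite -big_split; apply: eq_bigr => i _; rewrite mulrDr. Qed.

Lemma partBC (M L : nat) lambda omega beta eta zeta A h rho :
  q3 beta A -> q4 L omega beta eta A h -> q5 M L lambda omega beta eta zeta A h rho Phi ->
  comm (X h + bd * X rho + X rho * b) (bd * X (Dlt A) * X rho - X rho * X (Dlt A) * b) =
  \sum_(1 <= i < M.+1) lambda i *: X A ^+ i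
  - beta *: (X h + bd * X rho + X rho * b) ^+ 2 + eta *: (X h + bd * X rho + X rho * b)
  + \sum_(1 <= i < L.+1) omega i *: acomm (X A ^+ i) (X h + bd * X rho + X rho * b)
  + zeta%:A.
Proof.
move=> Q3 Q4 Q5.
rewrite N1C NF_B sum_acomm !XsumExp Xconst.
rewrite !(NF_X (fun n => \sum_(_ <- _) _)) (NF_X (fun _ => zeta)) expr2.
rewrite /comm /acomm !(NF_mul, NF_sub, NF_scale, NF_add).
apply: NF_ext => n /=; rewrite /zf.
- have E := Q5 n; rewrite -mulr_suml in E. lc (1 : C) E.
- have E := Q4 n; rewrite sumsplit in E.
  lc (rho n) E.
- have E := Q4 n; rewrite sumsplit in E.
  lc (rho n) E.
- have E := Q3 n. lc (rho n * rho (n + 1)) E.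
- have E := Q3 n. lc (rho n * rho (n + 1)) E.
Qed.

End AlgS.

Theorem proposition7 (C : numClosedFieldType) (M : nat) (hM : (1 <= M)%N)
  (alpha lambda omega : nat -> C) (beta delta eps eta zeta : C)
  (Alg : algType C) (phi : (int -> C) -> Alg) (b bd : Alg)
  (Phi A h rho : int -> C) :
  N_rep phi b bd Phi ->
  let L := M./2 in
  let Aop := phi A in
  let Bop := phi h + bd * phi rho + phi rho * b in
  let Cop := bd * phi (Dlt A) * phi rho - phi rho * phi (Dlt A) * b in
  (* [A,B] = C *)
  comm Aop Bop = Cop /\
  (* the algebra relations under (q1)-(q5) *)
  (q1 beta delta A -> q2 L alpha beta delta eps A h -> q3 beta A ->
   q4 L omega beta eta A h -> q5 M L lambda omega beta eta zeta A h rho Phi ->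
   comm Aop Cop = \sum_(1 <= i < L.+2) alpha i *: Aop ^+ i + delta *: Bop
                  + eps%:A + beta *: acomm Aop Bop
   /\ comm Bop Cop = \sum_(1 <= i < M.+1) lambda i *: Aop ^+ i
                  - beta *: Bop ^+ 2 + eta *: Bop
                  + \sum_(1 <= i < L.+1) omega i *: acomm (Aop ^+ i) Bop
                  + zeta%:A) /\
  (* (q1),(q3) solution for beta = 0 *)
  (beta = 0 -> forall s c1 : C, s ^+ 2 = delta ->
     let A1 := fun n : int => s * n%:~R + c1 in
     q1 beta delta A1 /\ q3 beta A1) /\
  (* (q1),(q3) solution for beta <> 0 *)
  (beta != 0 -> forall c1 : C,
     let A2 := fun n : int =>
       - (beta / 8) - delta / (2 * beta) + beta / 2 * (n%:~R + c1) ^+ 2 in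
     q1 beta delta A2 /\ q3 beta A2) /\
  (* (q2) solution, for any A' with delta + 2 beta A'(n) <> 0 *)
  (forall A' : int -> C, (forall n, delta + 2 * beta * A' n != 0) ->
     q2 L alpha beta delta eps A' (hsol L alpha beta delta eps A')) /\
  (* alternative formula, A' = derivative of A regarded as polynomial in n *)
  (beta = 0 -> forall s c1 : C, s ^+ 2 = delta ->
     let P : {poly C} := s *: 'X + c1%:P in
     let A1 := fun n : int => s * n%:~R + c1 in
     (forall n, delta + 2 * beta * A1 n != 0) ->
     forall n, hsol L alpha beta delta eps A1 n
       = - 4 * (\sum_(1 <= i < L.+2) alpha i * A1 n ^+ i + eps)
         / (4 * (P^`()).[n%:~R] ^+ 2 - beta ^+ 2)) /\
  (beta != 0 -> forall c1 : C,
     let P : {poly C} := (- (beta / 8) - delta / (2 * beta))%:P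
                         + (beta / 2) *: ('X + c1%:P) ^+ 2 in
     let A2 := fun n : int =>
       - (beta / 8) - delta / (2 * beta) + beta / 2 * (n%:~R + c1) ^+ 2 in
     (forall n, delta + 2 * beta * A2 n != 0) ->
     forall n, hsol L alpha beta delta eps A2 n
       = - 4 * (\sum_(1 <= i < L.+2) alpha i * A2 n ^+ i + eps)
         / (4 * (P^`()).[n%:~R] ^+ 2 - beta ^+ 2)).

Proof.
move=> HR L Aop Bop Cop.
split; first exact: (@partAB _ _ _ _ _ _ HR A h rho).
split.
  move=> Q1 Q2 Q3 Q4 Q5; split.
  - exact: (@partAC _ _ _ _ _ _ HR L alpha beta delta eps A h rho).
  - exact: (@partBC _ _ _ _ _ _ HR M L lambda omega beta eta zeta A h rho).
split.
  move=> B0 s c1 hs A1; split=> n; rewrite /Dlt /A1 !intrD mulr1z B0.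
  - rewrite -hs; ring.
  - ring.
split.
  move=> Bn c1 A2; split=> n; rewrite /Dlt /A2 !intrD mulr1z.
  - by field.
  - by field.
split.
  move=> A' HA n; rewrite /hsol. field. exact: HA.
split.
  move=> B0 s c1 hs P A1 HA n; rewrite /hsol /P !derivCE.
  rewrite !(hornerD, hornerZ, hornerX, hornerC, hornerM, hornerMn, hornerN, hornerXn, horner_exp) B0.
  have Hd : delta != 0 by have := HA n; rewrite B0 mulr0 mul0r addr0.
  rewrite mulr0 mul0r addr0.
  have -> : 4 * (s * 1 + 0) ^+ 2 - 0 ^+ 2 = 4 * delta by rewrite -hs; ring.
  by field.
move=> Bn c1 P A2 HA n; rewrite /hsol /P !derivCE.
rewrite !(hornerD, hornerZ, hornerX, hornerC, hornerM, hornerMn, hornerN, hornerXn, horner_exp).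
have eD : forall x : C, 4 * (0 + beta / 2 * ((1 + 0) * x + x * (1 + 0))) ^+ 2 - beta ^+ 2
  = 4 * (delta + 2 * beta * (- (beta / 8) - delta / (2 * beta) + beta / 2 * x ^+ 2)).
  by move=> x; field.
have Hn := HA n; rewrite /A2 in Hn *; rewrite eD.
set D := (delta + 2 * beta * _) in Hn *. by field.
Qed.
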